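(* Let \(\mathcal{F}\) be a set of increasing and amenable functions \(f\colon[0,\infty)\to[0,\infty)\). (a) If \(\mathcal{F}\) is \(2\)-separating, then for every metric space \((X,d)\) the following are equivalent: (i) \(f\circ d\) is a metric on \(X\) for every \(f\in\mathcal{F}\); (ii) \(d\) is an ultrametric on \(X\). (b) If \(\mathcal{F}\) is not \(2\)-separating, then there is a metric space \((X,d)\) such that \(f\circ d\) is a metric on \(X\) for every \(f\in\mathcal{F}\), but \(d\) is not an ultrametric on \(X\).
   Context: A function \(f\colon[0,\infty)\to[0,\infty)\) is amenable if \(f^{-1}(\{0\})=\{0\}\), and increasing if \(a\ge b\) implies \(f(a)\ge f(b)\). For \(k\in(1,\infty)\), a set \(\mathcal{F}\) of increasing amenable functions \([0,\infty)\to[0,\infty)\) is \(k\)-separating if for all \(t_1,t_2\in[0,\infty)\) with \(t_1<t_2\) there is \(f\in\mathcal{F}\) with \(k f(t_1)<f(t_2)\). A metric \(d\) is an ultrametric if \(d(x,y)\le\max\{d(x,z),d(z,y)\}\) for all \(x,y,z\). *)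

(* Defs.v *)
From Stdlib Require Export Reals.
Open Scope R_scope.

(* Functions [0,oo) -> [0,oo) are represented as R -> R; only their values on
   [0,oo) matter in every definition below. *)
Definition maps_nonneg (f : R -> R) : Prop := forall t, 0 <= t -> 0 <= f t.

Definition amenable (f : R -> R) : Prop :=
  maps_nonneg f /\ (forall t, 0 <= t -> (f t = 0 <-> t = 0)).

Definition increasing_nonneg (f : R -> R) : Prop :=
  forall a b, 0 <= b -> b <= a -> f b <= f a.

Definition separating (k : R) (F : (R -> R) -> Prop) : Prop :=
  forall t1 t2, 0 <= t1 -> t1 < t2 -> exists f, F f /\ k * f t1 < f t2.

Definition is_metric {X : Type} (d : X -> X -> R) : Prop :=
  (forall x y, 0 <= d x y) /\
  (forall x y, d x y = 0 <-> x = y) /\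
  (forall x y, d x y = d y x) /\
  (forall x y z, d x y <= d x z + d z y).

Definition is_ultrametric {X : Type} (d : X -> X -> R) : Prop :=
  is_metric d /\ (forall x y z, d x y <= Rmax (d x z) (d z y)).

(* Main.v *)
Require Import Defs.
From Stdlib Require Import Reals Lra Classical.
Open Scope R_scope.

Inductive three : Type := TA | TB | TC.

Definition d3 (a b : R) (x y : three) : R :=
  match x, y with
  | TA, TA | TB, TB | TC, TC => 0
  | TA, TB | TB, TA => b
  | _, _ => a
  end.

Lemma Rmax_le_sum (f : R -> R) u v : 0 <= u -> 0 <= v ->
  increasing_nonneg f -> maps_nonneg f -> f (Rmax u v) <= f u + f v.
Proof.
  intros Hu Hv Hi Hn. pose proof (Hn u Hu). pose proof (Hn v Hv).
  unfold Rmax; destruct (Rle_dec u v); lra.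
Qed.

Lemma example (F : (R -> R) -> Prop)
  (HF : forall f, F f -> increasing_nonneg f /\ amenable f) (a b : R) :
  0 < a -> a < b -> b <= 2 * a -> (forall f, F f -> f b <= 2 * f a) ->
  exists (X : Type) (d : X -> X -> R), is_metric d /\
       (forall f, F f -> is_metric (fun x y => f (d x y))) /\ ~ is_ultrametric d.
Proof.
  intros Ha Hab Hb2 HP. exists three, (d3 a b). split; [|split].
  - split; [|split; [|split]].
    + intros x y; destruct x, y; simpl; lra.
    + intros x y; destruct x, y; simpl; split; intro H; try lra; try discriminate; reflexivity.
    + intros x y; destruct x, y; reflexivity.
    + intros x y z; destruct x, y, z; simpl; lra.
  - intros f Hf. destruct (HF f Hf) as [Hi [Hn Hz]].
    assert (f0 : f 0 = 0) by (apply (Hz 0); lra).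
    assert (fa0 : 0 < f a).
    { pose proof (Hn a ltac:(lra)). destruct (Rle_lt_or_eq_dec _ _ H); auto.
      symmetry in e. apply (proj1 (Hz a ltac:(lra))) in e; lra. }
    assert (fab : f a <= f b) by (apply Hi; lra).
    pose proof (HP f Hf) as fb.
    split; [|split; [|split]].
    + intros x y; destruct x, y; simpl; lra.
    + intros x y; destruct x, y; simpl; split; intro H; try lra; try discriminate; reflexivity.
    + intros x y; destruct x, y; reflexivity.
    + intros x y z; destruct x, y, z; simpl; lra.
  - intros [_ H]. specialize (H TA TB TC). simpl in H.
    unfold Rmax in H; destruct (Rle_dec a a); lra.
Qed.

Theorem theorem2p15 (F : (R -> R) -> Prop)
  (HF : forall f, F f -> increasing_nonneg f /\ amenable f) :
  (separating 2 F ->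
     forall (X : Type) (d : X -> X -> R), is_metric d ->
       ((forall f, F f -> is_metric (fun x y => f (d x y))) <-> is_ultrametric d))
  /\
  (~ separating 2 F ->
     exists (X : Type) (d : X -> X -> R), is_metric d /\
       (forall f, F f -> is_metric (fun x y => f (d x y))) /\ ~ is_ultrametric d).
Proof.
  split.
  - intros Hsep X d Hd. destruct Hd as [Hd0 [Hdz [Hds Hdt]]]. split.
    + intros Hall. split; [repeat split; auto; apply Hdz; auto|].
      intros x y z. destruct (Rle_lt_dec (d x y) (Rmax (d x z) (d z y))) as [H|H]; auto.
      exfalso.
      assert (H0 : 0 <= Rmax (d x z) (d z y)) by (unfold Rmax; destruct Rle_dec; auto).
      destruct (Hsep _ _ H0 H) as [f [Hf Hlt]].
      destruct (HF f Hf) as [Hi [Hn _]].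
      destruct (Hall f Hf) as [_ [_ [_ Ht]]].
      specialize (Ht x y z).
      assert (f (d x z) <= f (Rmax (d x z) (d z y))) by (apply Hi; auto; apply Rmax_l).
      assert (f (d z y) <= f (Rmax (d x z) (d z y))) by (apply Hi; auto; apply Rmax_r).
      lra.
    + intros [_ Hu] f Hf. destruct (HF f Hf) as [Hi [Hn Hz]].
      split; [|split; [|split]].
      * intros x y; apply Hn; auto.
      * intros x y; split; intro H.
        -- apply Hdz. apply (Hz _ (Hd0 x y)); auto.
        -- apply (Hz _ (Hd0 x y)). apply Hdz; auto.
      * intros x y; rewrite Hds; reflexivity.
      * intros x y z. apply Rle_trans with (f (Rmax (d x z) (d z y))).
        -- apply Hi; [apply Hd0|apply Hu].
        -- apply Rmax_le_sum; auto.
  - intros Hns.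
    assert (Hex : exists t1 t2, 0 <= t1 /\ t1 < t2 /\ forall f, F f -> f t2 <= 2 * f t1).
    { apply NNPP; intro Hc. apply Hns. intros t1 t2 H1 H2.
      apply NNPP; intro Hc2. apply Hc. exists t1, t2. split; auto. split; auto.
      intros f Hf. apply Rnot_lt_le. intro Hl. apply Hc2. exists f; auto. }
    destruct Hex as [t1 [t2 [H1 [H2 HP]]]].
    destruct (Rle_lt_or_eq_dec _ _ H1) as [Hp|Hz].
    + apply (example F HF t1 (Rmin t2 (2 * t1))); auto.
      * unfold Rmin; destruct Rle_dec; lra.
      * apply Rmin_r.
      * intros f Hf. eapply Rle_trans; [|apply (HP f Hf)].
        destruct (HF f Hf) as [Hi _]. apply Hi.
        -- unfold Rmin; destruct Rle_dec; lra.
        -- apply Rmin_l.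
    + subst t1. apply (example F HF 1 2); try lra.
      intros f Hf. exfalso. destruct (HF f Hf) as [_ [Hn Hz]].
      pose proof (HP f Hf).
      assert (f 0 = 0) by (apply (Hz 0); lra).
      pose proof (Hn t2 ltac:(lra)).
      assert (f t2 = 0) by lra. apply (proj1 (Hz t2 ltac:(lra))) in H4; lra.
Qed.
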